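(* For $j\ge 0$ define the permutation of $\{1,\dots,2j+5\}$ $$\alpha^{(j)}=2j+4,\ 3,\ \omega^{(j)},\ 1,\ 5,\ 2,$$ where $\omega^{(j)}$ is the concatenation, for $i=j,j-1,\dots,1$ (in this order), of the pairs $2i+2,\,2i+5$; that is, $\omega^{(j)}=2j+2,2j+5,2j,2j+3,2j-2,2j+1,\dots,6,9,4,7$ (and $\omega^{(0)}$ is empty, so $\alpha^{(0)}=43152$). Then: (i) the set $\{\alpha^{(j)}\}_{j\ge0}$ is an infinite antichain in the permutation pattern poset; (ii) no $\alpha^{(j)}$ is $2$-sortable; (iii) each $\alpha^{(j)}$ is minimal with this property: deleting any single entry of $\alpha^{(j)}$ (and standardizing) yields a $2$-sortable permutation.
   Context: The $\mathfrak{D}^k\mathfrak{I}$ machine consists of $k$ stacks $D_1,\dots,D_k$ (decreasing stacks) followed in series by a stack $I$ (increasing stack). The input permutation is read from left to right. The elements of each $D_i$ must be in decreasing order from top to bottom (top is largest), and those of $I$ in increasing order from top to bottom (top is smallest). Operations: $d_0$ pushes the next input element into $D_1$; $d_i$ ($1\le i\le k-1$) moves the top of $D_i$ to $D_{i+1}$; $d_k$ moves the top of $D_k$ to $I$; $d_{k+1}$ pops the top of $I$ and appends it to the output. An operation is legal if it respects the stack restrictions. A permutation $\pi$ is $k$-sortable if some sequence of legal operations of the $\mathfrak{D}^k\mathfrak{I}$ machine outputs the elements of $\pi$ in increasing order. The permutation pattern poset orders permutations by pattern containment $\sigma\le\pi$. *)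

(* Defs.v *)
From mathcomp Require Import all_boot.
Set Implicit Arguments. Unset Strict Implicit. Unset Printing Implicit Defensive.

(* Permutations are sequences of distinct naturals (one-line notation). *)

Definition std (s : seq nat) : seq nat :=
  map (fun x => (count (fun y => y < x) s).+1) s.

Definition contains (sigma pi : seq nat) : Prop :=
  exists m : bitseq, std (mask m pi) = std sigma.

Definition delete_at (i : nat) (s : seq nat) : seq nat := take i s ++ drop i.+1 s.

Definition omega (j : nat) : seq nat :=
  flatten [seq [:: i.*2.+2; i.*2 + 5] | i <- rev (iota 1 j)].

Definition alpha (j : nat) : seq nat :=
  [:: j.*2 + 4; 3] ++ omega j ++ [:: 1; 5; 2].

(* The D^k I machine.  State = (input, [D_1;...;D_k], stI, output); stacks are
   lists with head = top; output is accumulated left to right. *)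
Definition mstate := (seq nat * seq (seq nat) * seq nat * seq nat)%type.

(* decreasing stack: top is largest, so a new element must exceed the top *)
Definition can_push_dec (x : nat) (s : seq nat) : bool :=
  if s is y :: _ then y < x else true.
(* increasing stack: top is smallest *)
Definition can_push_inc (x : nat) (s : seq nat) : bool :=
  if s is y :: _ then x < y else true.

(* remove the top element from source i (0 = input, i >= 1 = D_i) *)
Definition take_src (i : nat) (st : mstate) : option (nat * mstate) :=
  let: (inp, ds, stI, out) := st in
  if i == 0 then
    (if inp is x :: r then Some (x, (r, ds, stI, out)) else None)
  else
    (if nth [::] ds i.-1 is x :: r
     then Some (x, (inp, set_nth [::] ds i.-1 r, stI, out)) else None).

Definition step (k op : nat) (st : mstate) : option mstate :=
  if op < k then
    (* d_op : source (input or D_op) -> D_{op+1} *)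
    match take_src op st with
    | Some (x, (inp, ds, stI, out)) =>
        let D := nth [::] ds op in
        if can_push_dec x D then Some (inp, set_nth [::] ds op (x :: D), stI, out)
        else None
    | None => None
    end
  else if op == k then
    (* d_k : source (D_k, or input if k = 0) -> I *)
    match take_src k st with
    | Some (x, (inp, ds, stI, out)) =>
        if can_push_inc x stI then Some (inp, ds, x :: stI, out) else None
    | None => None
    end
  else if op == k.+1 then
    let: (inp, ds, stI, out) := st in
    if stI is x :: r then Some (inp, ds, r, rcons out x) else None
  else None.

Definition run (k : nat) (ops : seq nat) (st : mstate) : option mstate :=
  foldl (fun o op => obind (step k op) o) (Some st) ops.

Definition sortable (k : nat) (pi : seq nat) : Prop :=
  exists ops : seq nat,
    run k ops (pi, nseq k [::], [::], [::]) =
    Some ([::], nseq k [::], [::], sort leq pi).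

(* Main.v *)
Require Import Defs.
From mathcomp Require Import all_boot zify.
Set Implicit Arguments. Unset Strict Implicit. Unset Printing Implicit Defensive.


Lemma run_nil k st : run k [::] st = Some st.
Proof. by []. Qed.

Lemma foldl_none k ops : foldl (fun o op => obind (step k op) o) None ops = None.
Proof. by elim: ops. Qed.

Lemma run_cons k op ops st :
  run k (op :: ops) st =
  match step k op st with Some st' => run k ops st' | None => None end.
Proof. rewrite /run /=. case: (step k op st) => //= ; exact: foldl_none. Qed.

Lemma run_cat k o1 o2 st :
  run k (o1 ++ o2) st = match run k o1 st with Some st' => run k o2 st' | None => None end.
Proof.
elim: o1 st => [|op o1 IH] st //=.
rewrite !run_cons; case: (step k op st) => // st'; exact: IH.
Qed.

Lemma step2P op inp d1 d2 I out st' :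
  step 2 op (inp, [:: d1; d2], I, out) = Some st' ->
  [\/ exists x r, [/\ op = 0, inp = x :: r, can_push_dec x d1 & st' = (r, [:: x :: d1; d2], I, out)],
      exists x r, [/\ op = 1, d1 = x :: r, can_push_dec x d2 & st' = (inp, [:: r; x :: d2], I, out)],
      exists x r, [/\ op = 2, d2 = x :: r, can_push_inc x I & st' = (inp, [:: d1; r], x :: I, out)] |
      exists x r, [/\ op = 3, I = x :: r & st' = (inp, [:: d1; d2], r, rcons out x)]].
Proof.
rewrite /step; case: op => [|[|[|[|op]]]] //=.
- case: inp => [|x r] //=; case: ifP => // h [<-]; apply: Or41; by exists x, r.
- case: d1 => [|x r] //=; case: ifP => // h [<-]; apply: Or42; by exists x, r.
- case: d2 => [|x r] //=; case: ifP => // h [<-]; apply: Or43; by exists x, r.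
- case: I => [|x r] //= [<-]; apply: Or44; by exists x, r.
Qed.

Definition gtr (a b : nat) := b < a.

Definition WF (st : mstate) : Prop :=
  match st with
  | (inp, [:: d1; d2], si, out) => [/\ sorted gtr d1, sorted gtr d2 & sorted ltn si]
  | _ => False
  end.

Definition elems (st : mstate) : seq nat :=
  let: (inp, ds, si, out) := st in inp ++ flatten ds ++ si ++ out.

Lemma path_gtr_push x d : can_push_dec x d -> sorted gtr d -> sorted gtr (x :: d).
Proof. by case: d => //= y d h ->; rewrite andbT. Qed.

Lemma path_ltn_push x d : can_push_inc x d -> sorted ltn d -> sorted ltn (x :: d).
Proof. by case: d => //= y d h ->; rewrite andbT. Qed.

Lemma step2_WF op st st' : WF st -> step 2 op st = Some st' -> WF st' /\ perm_eq (elems st') (elems st).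
Proof.
case: st => [[[inp ds] si] out].
case: ds => [|d1 [|d2 [|? ?]]] //= w H; move: w; case/step2P: H =>
  [[x [r [_ -> h ->]]]|[x [r [_ -> h ->]]]|[x [r [_ -> h ->]]]|[x [r [_ -> ->]]]] /= [s1 s2 s3].
all: split; last by apply/permP => p; rewrite -?cats1 /= !count_cat /=; rewrite ?count_cat /=; lia.
- by split => //; exact: (path_gtr_push h s1).
- by split => //; [exact: path_sorted s1 | exact: (path_gtr_push h s2)].
- by split => //; [exact: path_sorted s2 | exact: (path_ltn_push h s3)].
- by split => //; exact: path_sorted s3.
Qed.

Lemma run2_WF ops st st' : WF st -> run 2 ops st = Some st' -> WF st' /\ perm_eq (elems st') (elems st).
Proof.
elim: ops st => [|op ops IH] st w /=; first by case=> <-.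
rewrite run_cons; case E: (step 2 op st) => [st1|] // /(IH st1).
have [w1 p1] := step2_WF w E.
case=> // w2 p2; split=> //; exact: perm_trans p2 p1.
Qed.

Lemma run_pops (inp d1 d2 si out : seq nat) :
  run 2 (nseq (size si) 3) (inp, [:: d1; d2], si, out) = Some (inp, [:: d1; d2], [::], out ++ si).
Proof.
elim: si out => [|x si IH] out /=; first by rewrite cats0.
by rewrite run_cons /= IH cat_rcons.
Qed.

Lemma sortable_of_run s ops si out :
  run 2 ops (s, [:: [::]; [::]], [::], [::]) = Some ([::], [:: [::]; [::]], si, out) ->
  sorted leq (out ++ si) -> sortable 2 s.
Proof.
move=> h hs; exists (ops ++ nseq (size si) 3).
rewrite run_cat h run_pops /=.
have [_ p] := run2_WF (st:=(s, [:: [::]; [::]], [::], [::])) (ltac:(done)) h.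
rewrite /= !cats0 in p.
congr Some; congr (_, _).
have p2 : perm_eq (out ++ si) s by rewrite perm_catC.
rewrite -(sorted_sort leq_trans hs).
apply/(perm_sortP leq_total leq_trans anti_leq); exact: p2.
Qed.


Lemma count_ltn_le (l : seq nat) x z : x <= z ->
  count (fun y => y < x) l <= count (fun y => y < z) l.
Proof. move=> h; apply: sub_count => y /= hy; exact: leq_trans hy h. Qed.

Lemma count_ltn_lt (l : seq nat) x z : x \in l -> x < z ->
  count (fun y => y < x) l < count (fun y => y < z) l.
Proof.
elim: l => [|y l IH] //=; rewrite in_cons => /orP [/eqP <-|hx] h.
  rewrite ltnn h /= add0n add1n ltnS; exact: count_ltn_le (ltnW h).
have := IH hx h; have : (y < x) <= (y < z).
  by case: (ltnP y x) => //= hyx; rewrite (ltn_trans hyx h).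
lia.
Qed.

Section Proj.
Variables (s : seq nat) (P : pred nat).
Let s' := filter P s.
Definition gproj x := (count (fun y => y < x) s').+1.
Definition proj (l : seq nat) := map gproj (filter P l).
Definition projst (st : mstate) : mstate :=
  let: (inp, ds, si, out) := st in (proj inp, map proj ds, proj si, proj out).

Lemma gproj_lt x z : P x -> x \in s -> x < z -> gproj x < gproj z.
Proof. move=> px xs h; rewrite /gproj ltnS; apply: count_ltn_lt h; by rewrite mem_filter px. Qed.

Lemma gproj_le x z : x <= z -> gproj x <= gproj z.
Proof. move=> h; rewrite /gproj ltnS; exact: count_ltn_le. Qed.

Lemma all_lt_of_dec x d : can_push_dec x d -> sorted gtr d -> all (fun z => z < x) d.
Proof.
case: d => [|y d] //= h hp; rewrite h /=.
have := order_path_min (leT:=gtr) _ hp.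
move=> /(_ _) H; apply/allP => z zd.
have /allP/(_ z zd) : all (gtr y) d by apply: H => a b c /= h1 h2; exact: ltn_trans h2 h1.
rewrite /gtr => hz; exact: ltn_trans hz h.
Qed.

Lemma all_gt_of_inc x d : can_push_inc x d -> sorted ltn d -> all (fun z => x < z) d.
Proof.
case: d => [|y d] //= h hp; rewrite h /=.
have := order_path_min (leT:=ltn) ltn_trans hp => /allP H.
apply/allP => z zd; exact: ltn_trans h (H z zd).
Qed.

Lemma proj_dec x d : P x -> x \in s -> can_push_dec x d -> sorted gtr d ->
  {subset d <= s} -> can_push_dec (gproj x) (proj d).
Proof.
move=> px xs h hd sub; have /allP A := all_lt_of_dec h hd.
rewrite /proj; case E: (filter P d) => [|z l] //=.
have : z \in filter P d by rewrite E mem_head.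
rewrite mem_filter => /andP [pz zd].
apply: gproj_lt => //; [exact: sub | exact: A].
Qed.

Lemma proj_inc x d : P x -> x \in s -> can_push_inc x d -> sorted ltn d ->
  can_push_inc (gproj x) (proj d).
Proof.
move=> px xs h hd; have /allP A := all_gt_of_inc h hd.
rewrite /proj; case E: (filter P d) => [|z l] //=.
have : z \in filter P d by rewrite E mem_head.
rewrite mem_filter => /andP [pz zd].
apply: gproj_lt => //; exact: A.
Qed.

Definition Inv st := WF st /\ {subset elems st <= s}.

Lemma step_sim op st st' : Inv st -> step 2 op st = Some st' ->
  projst st' = projst st \/ exists op', step 2 op' (projst st) = Some (projst st').
Proof.
case: st => [[[inp ds] si] out].
case: ds => [|d1 [|d2 [|? ?]]]; try by case; case.
move=> [w sub] H; move: w sub; case/step2P: H =>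
  [[x [r [_ -> h ->]]]|[x [r [_ -> h ->]]]|[x [r [_ -> h ->]]]|[x [r [_ -> ->]]]] /= [s1 s2 s3] sub.
- case px: (P x); last by left; rewrite /proj /= px.
  right; exists 0; rewrite /step /= /proj /= px /=.
  have xs : x \in s by apply: sub; rewrite mem_head.
  have -> // : can_push_dec (gproj x) (proj d1).
  apply: proj_dec => // z zd; apply: sub; rewrite !(mem_cat, in_cons) zd; by rewrite !orbT.
- case px: (P x); last by left; rewrite /proj /= px.
  right; exists 1; rewrite /step /= /proj /= px /=.
  have xs : x \in s by apply: sub; rewrite !(mem_cat, in_cons) eqxx !orbT.
  have -> // : can_push_dec (gproj x) (proj d2).
  apply: proj_dec => // z zd; apply: sub; rewrite !(mem_cat, in_cons) zd; by rewrite !orbT.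
- case px: (P x); last by left; rewrite /proj /= px.
  right; exists 2; rewrite /step /= /proj /= px /=.
  have xs : x \in s by apply: sub; rewrite !(mem_cat, in_cons) eqxx !orbT.
  have -> // : can_push_inc (gproj x) (proj si).
  exact: proj_inc.
- case px: (P x); last by left; rewrite /proj /= px filter_rcons px.
  right; exists 3; rewrite /step /= /proj /= px /= filter_rcons px map_rcons.
  done.
Qed.

Lemma run_sim ops st st' : Inv st -> run 2 ops st = Some st' ->
  exists ops', run 2 ops' (projst st) = Some (projst st').
Proof.
elim: ops st => [|op ops IH] st iv /=; first by case=> <-; exists [::].
rewrite run_cons; case E: (step 2 op st) => [st1|] // /(IH st1) H.
have iv1 : Inv st1.
  have [w1 p1] := step2_WF iv.1 E; split=> // z; rewrite (perm_mem p1); exact: iv.2.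
have [ops' h'] := H iv1.
case: (step_sim iv E) => [e|[op' e]].
  by exists ops'; rewrite -e.
by exists (op' :: ops'); rewrite run_cons e.
Qed.

End Proj.

Lemma sortable_std_filter s P : sortable 2 s -> sortable 2 (std (filter P s)).
Proof.
case=> ops h.
have iv : Inv s (s, [:: [::]; [::]], [::], [::]).
  by split => // z /=; rewrite !cats0.
have [ops' h'] := run_sim P iv h.
exists ops'; move: h'; rewrite /= /proj /=.
set s' := filter P s.
have -> : [seq gproj s P i | i <- s'] = std s' by [].
move=> ->; congr (Some (_, _, _, _)).
rewrite filter_sort; [|exact: leq_total|exact: leq_trans].
rewrite -/s'.
have hs : sorted leq [seq gproj s P i | i <- sort leq s'].
  apply: homo_sorted; first by move=> x y; exact: gproj_le.
  exact: sort_sorted leq_total _.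
rewrite -(sorted_sort leq_trans hs).
apply/(perm_sortP leq_total leq_trans anti_leq).
by rewrite /std perm_map // perm_sort.
Qed.

Lemma sortable_std_mask s m : uniq s -> sortable 2 s -> sortable 2 (std (mask m s)).
Proof.
move=> u h; have := sortable_std_filter (mem (mask m s)) h.
by move/subseq_uniqP: (mask_subseq m s) => /(_ u) <-.
Qed.


Definition om2 lo m := flatten [seq [:: i.*2.+2; i.*2 + 5] | i <- rev (iota lo m)].

Lemma om2S lo m : om2 lo m.+1 = [:: (lo + m).*2.+2; (lo + m).*2 + 5] ++ om2 lo m.
Proof. by rewrite /om2 -[m.+1]addn1 iotaD rev_cat /=. Qed.

Lemma omega_om2 j : omega j = om2 1 j.
Proof. by []. Qed.

Lemma omegaS j : omega j.+1 = [:: j.*2.+4; j.*2 + 7] ++ omega j.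
Proof.
rewrite !omega_om2 om2S add1n; congr ([:: _; _] ++ _); rewrite doubleS; lia.
Qed.

Lemma om2_split i m : om2 1 (i + m) = om2 i.+1 m ++ om2 1 i.
Proof. by rewrite /om2 iotaD rev_cat map_cat flatten_cat add1n. Qed.

Lemma size_omega j : size (omega j) = j.*2.
Proof. elim: j => [|j IH] //; rewrite omegaS /= IH doubleS. done. Qed.

Lemma omega_ge4 j : all (fun x => 4 <= x) (omega j).
Proof. elim: j => [|j IH] //; rewrite omegaS all_cat IH andbT /=; lia. Qed.

Lemma alphaE j : alpha j = [:: j.*2 + 4; 3] ++ omega j ++ [:: 1; 5; 2].
Proof. by []. Qed.

Lemma alpha_perm j : perm_eq (alpha j) (iota 1 (j.*2 + 5)).
Proof.
elim: j => [|j IH]; first by [].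
have E : perm_eq (alpha j.+1) ([:: j.*2 + 6; j.*2 + 7] ++ alpha j).
  rewrite !alphaE omegaS.
  have -> : j.+1.*2 + 4 = j.*2 + 6 by rewrite doubleS; lia.
  have -> : j.*2.+4 = j.*2 + 4 by lia.
  apply/permP => q; rewrite /= !count_cat /=; lia.
apply: (perm_trans E).
have -> : j.+1.*2 + 5 = (j.*2 + 5) + 2 by rewrite doubleS; lia.
rewrite iotaD perm_catC; apply: perm_cat => //=.
have -> : 1 + (j.*2 + 5) = j.*2 + 6 by lia.
by have -> : (j.*2 + 6).+1 = j.*2 + 7 by lia.
Qed.

Lemma alpha_uniq j : uniq (alpha j).
Proof. by rewrite (perm_uniq (alpha_perm j)) iota_uniq. Qed.

Lemma alpha_sort j : sort leq (alpha j) = iota 1 (j.*2 + 5).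
Proof.
have hs : sorted leq (iota 1 (j.*2 + 5)) by apply: (sub_sorted _ (iota_ltn_sorted _ _)) => x y /ltnW.
rewrite -(sorted_sort leq_trans hs).
by apply/(perm_sortP leq_total leq_trans anti_leq); exact: alpha_perm.
Qed.

Lemma size_alpha j : size (alpha j) = j.*2 + 5.
Proof. by rewrite (perm_size (alpha_perm j)) size_iota. Qed.


Ltac pm := apply/permP => ?; rewrite /= ?cats0 !count_cat /= ?count_cat /=; lia.

Section B.
Variable j : nat.
Let A := alpha j.

Lemma A_split : A = ([:: j.*2 + 4; 3] ++ omega j) ++ [:: 1; 5; 2].
Proof. by rewrite /A alphaE catA. Qed.

Lemma size_pre : size ([:: j.*2 + 4; 3] ++ omega j) = j.*2 + 2.
Proof. rewrite size_cat size_omega /=; lia. Qed.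

Lemma pre_ge3 x : x \in [:: j.*2 + 4; 3] ++ omega j -> 3 <= x.
Proof.
rewrite mem_cat !in_cons in_nil orbF => /orP [/orP [/eqP ->|/eqP ->]|xo] //; first lia.
by have /allP /(_ x xo) := omega_ge4 j; lia.
Qed.

Lemma takeA_ge3 p x : p <= j.*2 + 2 -> x \in take p A -> 3 <= x.
Proof.
move=> hp; rewrite -(take_takel _ hp) A_split -size_pre take_size_cat // => /mem_take.
exact: pre_ge3.
Qed.

Lemma dropA p : p <= j.*2 + 2 -> drop p A = drop p ([:: j.*2 + 4; 3] ++ omega j) ++ [:: 1; 5; 2].
Proof.
move=> hp; rewrite A_split drop_cat size_pre.
case: ltnP => // h; have -> : p = j.*2 + 2 by lia.
by rewrite -size_pre drop_size subnn drop0.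
Qed.

Lemma dropA_2 p : p <= j.*2 + 2 -> 2 \in drop p A.
Proof. by move=> hp; rewrite dropA // mem_cat !in_cons eqxx !orbT. Qed.

Lemma dropA_full : drop (j.*2 + 2) A = [:: 1; 5; 2].
Proof. by rewrite dropA // -size_pre drop_size. Qed.

Lemma take2_drop p : 2 \in take p A -> drop p A = [::].
Proof.
move=> h; apply: drop_oversize; rewrite /A size_alpha.
case: (ltnP p (j.*2 + 5)) => // hp.
have : 2 \in take p (([:: j.*2 + 4; 3] ++ omega j) ++ [:: 1; 5]).
  have E : A = rcons (([:: j.*2 + 4; 3] ++ omega j) ++ [:: 1; 5]) 2 by rewrite /A alphaE -cats1 -!catA.
  move: h; rewrite E -cats1 takel_cat //.
  by rewrite !size_cat size_omega /=; lia.
move/mem_take; rewrite mem_cat => /orP [/pre_ge3 //|] //.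
Qed.

Lemma three_pos p : 3 \in take p A -> 2 <= p.
Proof.
case: p => [|[|p]] //; rewrite /A alphaE /= !in_cons in_nil orbF => /eqP; lia.
Qed.

Lemma chain_omega i q : q <= i.*2 ->
  exists x y, [/\ y \in (i.*2 + 4) :: take q (omega i ++ [:: 1; 5; 2]), 4 <= y,
                  x \in drop q (omega i ++ [:: 1; 5; 2]) & y < x].
Proof.
elim: i q => [|i IH] q hq.
  have -> : q = 0 by move: hq; rewrite double0; lia.
  by exists 5, 4.
rewrite omegaS -catA /=.
case: q hq => [|[|q]] hq.
- exists (i.*2 + 7), (i.+1.*2 + 4); split; rewrite ?in_cons ?eqxx ?orbT //; rewrite doubleS; lia.
- exists (i.*2 + 7), (i.*2.+4); split; rewrite ?in_cons ?eqxx ?orbT //; lia.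
- have [|x [y [h1 h2 h3 h4]]] := IH q; first by move: hq; rewrite doubleS; lia.
  exists x, y; split => //.
  move: h1; rewrite !in_cons => /orP [/eqP ->|->]; last by rewrite !orbT.
  apply/orP; right; apply/orP; left; apply/eqP; lia.
Qed.

Lemma chainA p : 2 <= p -> p <= j.*2 + 2 ->
  exists x y, [/\ y \in take p A, 4 <= y, x \in drop p A & y < x].
Proof.
move=> h1 h2; have [|x [y [e1 e2 e3 e4]]] := @chain_omega j (p - 2); first lia.
have -> : p = (p - 2).+2 by lia.
exists x, y; split => //; rewrite /A alphaE /=.
  move: e1; rewrite !in_cons => /orP [->|->] //; by rewrite !orbT.
Qed.


Definition RI (st : mstate) : Prop :=
  [/\ WF st, perm_eq (elems st) A & exists p, st.1.1.1 = drop p A].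

Definition K2 (inp d1 d2 si : seq nat) :=
  exists x y, [/\ 3 <= y, y < x, y \in si, x \in inp ++ d1 ++ d2 & 2 \in inp ++ d1].
Definition Ph (inp d1 : seq nat) :=
  exists p, [/\ inp = drop p A, p <= j.*2 + 2 & 3 \in inp ++ d1].
Definition Good (st : mstate) : Prop :=
  match st with
  | (inp, [:: d1; d2], si, out) => out != iota 1 (size out) \/ K2 inp d1 d2 si \/ Ph inp d1
  | _ => False
  end.

Lemma drop_next p z r : drop p A = z :: r -> drop p.+1 A = r.
Proof. by move=> e; rewrite -[p.+1]add1n -drop_drop e /= drop0. Qed.

Lemma RI_step op st st' : RI st -> step 2 op st = Some st' -> RI st'.
Proof.
move=> [w pe [p ep]] H; have [w' pe'] := step2_WF w H.
split => //; first exact: perm_trans pe' pe.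
clear w' pe' pe.
case: st w ep H => [[[inp ds] si] out]; case: ds => [|d1 [|d2 [|? ?]]] // _ /= ep H.
case/step2P: H => [[x [r [_ e _ ->]]]|[x [r [_ _ _ ->]]]|[x [r [_ _ _ ->]]]|[x [r [_ _ ->]]]] /=;
  try by exists p.
by exists p.+1; symmetry; apply: (drop_next (z:=x)); rewrite -ep e.
Qed.

Lemma rest_perm p inp d1 d2 si out : inp = drop p A ->
  perm_eq (elems (inp, [:: d1; d2], si, out)) A -> perm_eq (d1 ++ d2 ++ si ++ out) (take p A).
Proof.
move=> -> /= pe.
have : perm_eq (drop p A ++ (d1 ++ d2 ++ si ++ out)) (drop p A ++ take p A).
  apply: perm_trans (_ : perm_eq _ A) _.
    apply: perm_trans pe; pm.
  by rewrite -{1}(cat_take_drop p A) perm_catC.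
by rewrite perm_cat2l.
Qed.

Lemma lt_of_sorted z r x : sorted gtr (z :: r) -> x \in r -> x < z.
Proof.
move=> /= hp xr; have := order_path_min (leT:=gtr) _ hp.
move=> /(_ _) H; have /allP /(_ x xr) // : all (gtr z) r.
by apply: H => a b c /= h1 h2; exact: ltn_trans h2 h1.
Qed.

Lemma iota_prefix_mem out y : out = iota 1 (size out) -> y \in out -> 1 <= y /\ (forall z, 1 <= z <= y -> z \in out).
Proof.
move=> e; rewrite e mem_iota => /andP [h1 h2]; split => // z /andP [z1 z2].
rewrite mem_iota; apply/andP; split => //; exact: leq_ltn_trans z2 h2.
Qed.

Lemma K1_rcons out x : out != iota 1 (size out) -> rcons out x != iota 1 (size (rcons out x)).
Proof.
move=> h; apply/eqP => e; move/eqP: h; apply.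
move: e; rewrite size_rcons -[(size out).+1]addn1 iotaD cats1 => /eqP.
by rewrite eqseq_rcons => /andP [/eqP ? _].
Qed.

Lemma uniq_cat_disj (a b : seq nat) x : uniq (a ++ b) -> x \in a -> x \in b -> False.
Proof. rewrite cat_uniq => /and3P [_ /hasPn H _] xa xb. by have := H x xb; rewrite /= xa. Qed.

Lemma Good_step op st st' : RI st -> Good st -> step 2 op st = Some st' -> Good st'.
Proof.
move=> ri; case: ri => w pe [p0 ep0].
case: st w pe ep0 => [[[inp ds] si] out]; case: ds => [|d1 [|d2 [|? ?]]] // w pe /= ep0.
have un : uniq (inp ++ (d1 ++ d2 ++ [::]) ++ si ++ out).
  by rewrite (perm_uniq pe) alpha_uniq.
rewrite cats0 in un.
case: w => s1 s2 s3.
move=> G H; case/step2P: H =>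
  [[z [r [_ ei h ->]]]|[z [r [_ ed h ->]]]|[z [r [_ ed h ->]]]|[z [r [_ es ->]]]] /=.
-
  rewrite ei in G ep0 un; case: G => [K|[[x [y [a1 a2 a3 a4 a5]]]|[p [ep hp h3]]]]; [by left| |].
  + right; left; exists x, y; split => //.
      by move: a4; rewrite !(mem_cat, in_cons); lia.
    by move: a5; rewrite !(mem_cat, in_cons); lia.
  + right; right.
    case: (ltnP p (j.*2 + 2)) => hp2.
      exists p.+1; split => //; first by symmetry; apply: drop_next; rewrite -ep.
      by move: h3; rewrite !(mem_cat, in_cons); lia.
    have ep' : p = j.*2 + 2 by lia.
    move: ep; rewrite ep' dropA_full => -[ez er]; subst z r.
    move: h3; rewrite !(mem_cat, in_cons) /= => h3.
    have /allP /(_ 3 h3) := all_lt_of_dec h s1; done.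
-
  subst d1; case: G => [K|[[x [y [a1 a2 a3 a4 a5]]]|[p [ep hp h3]]]]; [by left| |].
  + move: a5; rewrite !(mem_cat, in_cons) => /orP [a5|/orP [/eqP ez|a5]].
    * right; left; exists x, y; split => //; last by rewrite mem_cat a5.
      by move: a4; rewrite !(mem_cat, in_cons); lia.
    * subst z; exfalso.
      move: a4; rewrite !(mem_cat, in_cons) => /orP [xi|/orP [/orP [/eqP ex|xr]|xd]].
      -- have rp := rest_perm ep0 pe.
         have : 2 \in take p0 A by rewrite -(perm_mem rp) mem_head.
         move/take2_drop; rewrite -ep0 => e; by rewrite e in xi.
      -- lia.
      -- have := lt_of_sorted s1 xr; lia.
      -- have /allP /(_ x xd) := all_lt_of_dec h s2; lia.
    * right; left; exists x, y; split => //; last by rewrite mem_cat a5 orbT.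
      by move: a4; rewrite !(mem_cat, in_cons); lia.
  + move: h3; rewrite !(mem_cat, in_cons) => /orP [h3|/orP [/eqP ez|h3]].
    * by right; right; exists p; rewrite mem_cat h3.
    * subst z.
      have rp := rest_perm ep pe.
      have ge3 : forall x, x \in (3 :: r) ++ d2 ++ si ++ out -> 3 <= x.
        by move=> x; rewrite (perm_mem rp); exact: takeA_ge3.
      have er : r = [::].
        case E: r => [|w r'] //; exfalso.
        have wr : w \in r by rewrite E mem_head.
        have := lt_of_sorted s1 wr.
        have := ge3 w (ltac:(by rewrite !(mem_cat, in_cons) wr !orbT)); lia.
      subst r.
      have ed : d2 = [::].
        case E: d2 h => [|w d2'] //= h; exfalso.
        have wr : w \in d2 by rewrite E mem_head.
        have := ge3 w (ltac:(by rewrite !(mem_cat, in_cons) wr !orbT)); lia.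
      subst d2.
      have p2 : 2 <= p by apply: three_pos; rewrite -(perm_mem rp) mem_head.
      case Eo: out => [|o out']; rewrite Eo in rp ge3.
      -- right; left.
         have [x [y [c1 c2 c3 c4]]] := chainA p2 hp.
         exists x, y; split => //; first lia.
         ++ move: c1; rewrite -(perm_mem rp) /= in_cons cats0 => /orP [/eqP ey|] //; lia.
         ++ by rewrite ep mem_cat c3.
         ++ by rewrite ep cats0 dropA_2.
      -- left; apply/eqP => e.
         have [o1 H1] := iota_prefix_mem e (mem_head o out').
         have h1' : 1 \in o :: out' by apply: H1; rewrite o1.
         have := ge3 1 (ltac:(by rewrite !mem_cat h1' !orbT)); done.
    * by right; right; exists p; rewrite mem_cat h3 orbT.
-
  subst d2; case: G => [K|[[x [y [a1 a2 a3 a4 a5]]]|Ph1]]; [by left| |by right; right].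
  right; left; exists x, y; split => //; first by rewrite in_cons a3 orbT.
  move: a4; rewrite !(mem_cat, in_cons) => /orP [->|/orP [->|/orP [/eqP ex|->]]]; rewrite ?orbT //.
  subst x; have /allP /(_ y a3) := all_gt_of_inc h s3; lia.
-
  subst si; case: G => [K|[[x [y [a1 a2 a3 a4 a5]]]|Ph1]]; [by left; exact: K1_rcons| |by right; right].
  move: a3; rewrite in_cons => /orP [/eqP ey|yr].
  + subst y; left; apply/eqP => e.
    have zin : z \in rcons out z by rewrite mem_rcons mem_head.
    have [z1 H1] := iota_prefix_mem e zin.
    have : 2 \in rcons out z by apply: H1; lia.
    rewrite mem_rcons in_cons => /orP [/eqP e2|o2]; first lia.
    apply: (uniq_cat_disj (a := inp ++ d1) (b := d2 ++ (z :: r) ++ out) (x := 2)) => //.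
      by move: un; rewrite -!catA.
    by rewrite !mem_cat o2 !orbT.
  + right; left; exists x, y; split => //.
Qed.

Lemma Good_run ops st st' : RI st -> Good st -> run 2 ops st = Some st' -> Good st'.
Proof.
elim: ops st => [|op ops IH] st ri g /=; first by case=> <-.
rewrite run_cons; case E: (step 2 op st) => [st1|] //.
apply: IH; [exact: RI_step ri E | exact: Good_step ri g E].
Qed.

Lemma alpha_not_sortable : ~ sortable 2 A.
Proof.
case=> ops h.
have ri : RI (A, nseq 2 [::], [::], [::]).
  split => //; last by exists 0; rewrite drop0.
  by rewrite /= !cats0.
have g : Good (A, nseq 2 [::], [::], [::]).
  right; right; exists 0; split; [by rewrite drop0 | done | by rewrite cats0 /A alphaE !in_cons eqxx orbT].
have := Good_run ri g h; rewrite /= /A alpha_sort size_iota eqxx.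
case => [//|[[x [y [_ _ _ _ //]]]|[p [_ _ //]]]].
Qed.

End B.


Lemma st0 x r d1 d2 si out : can_push_dec x d1 ->
  step 2 0 (x :: r, [:: d1; d2], si, out) = Some (r, [:: x :: d1; d2], si, out).
Proof. by rewrite /step /= => ->. Qed.
Lemma st1 x r d2 inp si out : can_push_dec x d2 ->
  step 2 1 (inp, [:: x :: r; d2], si, out) = Some (inp, [:: r; x :: d2], si, out).
Proof. by rewrite /step /= => ->. Qed.
Lemma st2 x r d1 inp si out : can_push_inc x si ->
  step 2 2 (inp, [:: d1; x :: r], si, out) = Some (inp, [:: d1; r], x :: si, out).
Proof. by rewrite /step /= => ->. Qed.

Lemma cpd_mono x y d : x <= y -> can_push_dec x d -> can_push_dec y d.
Proof. by case: d => //= z d h h2; exact: leq_trans h2 h. Qed.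
Lemma cpi_mono x y d : y <= x -> can_push_inc x d -> can_push_inc y d.
Proof. by case: d => //= z d h h2; exact: leq_ltn_trans h h2. Qed.

Definition block := [:: 0; 0; 1; 2; 2; 1].
Definition blocks m := flatten (nseq m block).

Lemma blocks_run m i d1 rest si out T :
  can_push_dec (i.*2 + 4) d1 -> can_push_dec (i.*2 + 4) rest -> can_push_inc ((i + m).*2 + 5) si ->
  exists si', run 2 (blocks m) (om2 i.+1 m ++ T, [:: d1; ((i + m).*2 + 4) :: rest], si, out)
              = Some (T, [:: d1; (i.*2 + 4) :: rest], si', out) /\ can_push_inc (i.*2 + 5) si'.
Proof.
move=> h1 h2; elim: m si => [|m IH] si h3.
  by exists si; rewrite addn0 in h3 *.
rewrite om2S /blocks /= -/(blocks m).
have ea : (i.+1 + m).*2.+2 = (i + m).*2 + 4 by rewrite -!muln2; lia.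
have eb : (i.+1 + m).*2 + 5 = (i + m).*2 + 7 by rewrite -!muln2; lia.
have eD : (i + m.+1).*2 + 4 = (i + m).*2 + 6 by rewrite -!muln2; lia.
rewrite ea eb eD.
rewrite run_cons st0; last by apply: cpd_mono h1; rewrite -!muln2; lia.
rewrite run_cons st0 /=; last lia.
rewrite run_cons st1 /=; last lia.
rewrite run_cons st2; last by apply: cpi_mono h3; rewrite -!muln2; lia.
rewrite run_cons st2 /=; last lia.
rewrite run_cons st1; last by apply: cpd_mono h2; rewrite -!muln2; lia.
apply: IH => /=; lia.
Qed.

Definition final0 := [:: 0;0;1;0;2;2;1;2;1;2].
Definition finalY := [:: 0;0;1;0;2;2;2;1;2;1;2].
Definition Yph m := if m is m'.+1 then [:: 0;0;1;2;1] ++ blocks m' ++ finalY else final0.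

Lemma final0_run c si : 2 < c < 5 -> can_push_inc 5 si ->
  run 2 final0 ([:: 1;5;2], [:: [::]; [:: c]], si, [::]) =
  Some ([::], [:: [::]; [::]], [:: 1;2;c;5] ++ si, [::]).
Proof.
move=> /andP [hc1 hc2] h; rewrite /final0 /run /step /=.
by do 6 (rewrite /= ?h ?hc1 ?hc2).
Qed.

Ltac crun h := rewrite /run /step /=; by do 8 (rewrite /= ?h).

Lemma finalY_run si : can_push_inc 5 si ->
  run 2 finalY ([:: 1;5;2], [:: [::]; [:: 4; 3]], si, [::]) =
  Some ([::], [:: [::]; [::]], [:: 1;2;3;4;5] ++ si, [::]).
Proof. move=> h; crun h. Qed.

Definition fin1 := [:: 0;1;2;2;1;2;0;1;2].
Lemma fin1_run si : can_push_inc 5 si ->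
  run 2 fin1 ([:: 5;2], [:: [:: 3]; [:: 4]], si, [::]) =
  Some ([::], [:: [::]; [::]], [:: 2;3;4;5] ++ si, [::]).
Proof. move=> h; crun h. Qed.

Definition fin5 := [:: 2;1;2;0;0;1;2;1;2].
Lemma fin5_run si : can_push_inc 5 si ->
  run 2 fin5 ([:: 1;2], [:: [:: 3]; [:: 4]], si, [::]) =
  Some ([::], [:: [::]; [::]], [:: 1;2;3;4] ++ si, [::]).
Proof. move=> h; have h4 := cpi_mono (isT : 4 <= 5) h; crun h4. Qed.

Definition fin2 := [:: 2;1;2;0;1;2;3;3;3;0;1;2].
Lemma fin2_run si : can_push_inc 5 si ->
  run 2 fin2 ([:: 1;5], [:: [:: 3]; [:: 4]], si, [::]) =
  Some ([::], [:: [::]; [::]], 5 :: si, [:: 1;3;4]).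
Proof. move=> h; have h4 := cpi_mono (isT : 4 <= 5) h; rewrite /run /step /=; by do 8 (rewrite /= ?h ?h4). Qed.

Lemma Yph_run m si : can_push_inc (m.*2 + 5) si ->
  exists si', run 2 (Yph m) (omega m ++ [:: 1;5;2], [:: [::]; [:: 3]], si, [::]) =
              Some ([::], [:: [::]; [::]], si', [::]).
Proof.
case: m => [|m] h.
  by exists ([:: 1;2;3;5] ++ si); rewrite final0_run.
rewrite /Yph omegaS /= .
have eb : m.+1.*2 + 5 = m.*2 + 7 by rewrite -!muln2; lia.
rewrite eb in h.
have [|si1 [e1 h1]] := @blocks_run m 0 [::] [:: 3] (m.*2 + 7 :: si) [::] [:: 1;5;2] isT isT.
  by rewrite add0n /=; lia.
exists ([:: 1;2;3;4;5] ++ si1).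
rewrite run_cons st0 //= run_cons st0 /=; last lia.
rewrite run_cons st1; last by rewrite /=; lia.
rewrite run_cons st2 //.
rewrite run_cons st1 /=; last lia.
rewrite run_cat.
move: e1; rewrite add0n omega_om2 -[m.*2.+4]addn4 => ->.
by rewrite finalY_run.
Qed.

Lemma sortable_run_nil s ops si :
  run 2 ops (s, [:: [::]; [::]], [::], [::]) = Some ([::], [:: [::]; [::]], si, [::]) -> sortable 2 s.
Proof.
move=> h; apply: (sortable_of_run h) => /=.
have [[_ _ w] _] := run2_WF (st:=(s, [:: [::]; [::]], [::], [::])) (ltac:(done)) h.
by apply: sub_sorted w => x y /ltnW.
Qed.

Lemma sort_c1 j : sortable 2 ((j.*2 + 4) :: omega j ++ [:: 1;5;2]).
Proof.
have [si1 [e1 h1]] := @blocks_run j 0 [::] [::] [::] [::] [:: 1;5;2] isT isT isT.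
apply: (@sortable_run_nil _ ([:: 0;1] ++ blocks j ++ final0) ([:: 1;2;4;5] ++ si1)).
rewrite run_cons st0 // run_cons st1 // run_cat omega_om2.
move: e1; rewrite add0n => ->.
by rewrite final0_run.
Qed.

Lemma sort_c0 j : sortable 2 (3 :: omega j ++ [:: 1;5;2]).
Proof.
have [si1 e1] := @Yph_run j [::] isT.
apply: (@sortable_run_nil _ ([:: 0;1] ++ Yph j) si1).
by rewrite run_cons st0 // run_cons st1 // e1.
Qed.

Lemma Xstart j T : exists si1,
  run 2 ([:: 0;1;0] ++ blocks j) ([:: j.*2 + 4; 3] ++ omega j ++ T, [:: [::]; [::]], [::], [::])
  = Some (T, [:: [:: 3]; [:: 4]], si1, [::]) /\ can_push_inc 5 si1.
Proof.
have [si1 [e1 h1]] := @blocks_run j 0 [:: 3] [::] [::] [::] T isT isT isT.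
exists si1; split; last done.
by rewrite /= run_cons st0 // run_cons st1 // run_cons st0 // omega_om2.
Qed.

Lemma sort_c1' j : sortable 2 ([:: j.*2 + 4; 3] ++ omega j ++ [:: 5;2]).
Proof.
have [si1 [e1 h1]] := Xstart j [:: 5;2].
apply: (@sortable_run_nil _ (([:: 0;1;0] ++ blocks j) ++ fin1) ([:: 2;3;4;5] ++ si1)).
by rewrite run_cat e1 fin1_run.
Qed.

Lemma sort_c5 j : sortable 2 ([:: j.*2 + 4; 3] ++ omega j ++ [:: 1;2]).
Proof.
have [si1 [e1 h1]] := Xstart j [:: 1;2].
apply: (@sortable_run_nil _ (([:: 0;1;0] ++ blocks j) ++ fin5) ([:: 1;2;3;4] ++ si1)).
by rewrite run_cat e1 fin5_run.
Qed.

Lemma sort_c2 j : sortable 2 ([:: j.*2 + 4; 3] ++ omega j ++ [:: 1;5]).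
Proof.
have [si1 [e1 h1]] := Xstart j [:: 1;5].
have h : run 2 (([:: 0;1;0] ++ blocks j) ++ fin2) ([:: j.*2 + 4; 3] ++ omega j ++ [:: 1;5], [:: [::]; [::]], [::], [::])
  = Some ([::], [:: [::]; [::]], 5 :: si1, [:: 1;3;4]) by rewrite run_cat e1 fin2_run.
apply: (sortable_of_run h).
have [[_ _ w] _] := run2_WF (st:=(_, [:: [::]; [::]], [::], [::])) (ltac:(done)) h.
by rewrite /=; apply: sub_path w => x y /ltnW.
Qed.

Lemma sort_cA i t : sortable 2 ([:: (i.+1 + t).*2 + 4; 3] ++ om2 i.+2 t ++ [:: i.+1.*2 + 5] ++ omega i ++ [:: 1;5;2]).
Proof.
have [|si1 [e1 h1]] := @blocks_run t i.+1 [:: 3] [::] [::] [::] ([:: i.+1.*2 + 5] ++ omega i ++ [:: 1;5;2]) _ isT isT.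
  by rewrite /=; lia.
have [|si2 e2] := @Yph_run i ((i.+1.*2 + 4) :: (i.+1.*2 + 5) :: si1).
  by rewrite /= -!muln2; lia.
apply: (@sortable_run_nil _ (([:: 0;1;0] ++ blocks t) ++ [:: 0;1;2;2;1] ++ Yph i) si2).
rewrite run_cat /= run_cons st0 // run_cons st1 // run_cons st0 //.
rewrite e1.
rewrite run_cons st0 /=; last by rewrite -!muln2; lia.
rewrite run_cons st1 /=; last by rewrite -!muln2; lia.
rewrite run_cons st2 //.
rewrite run_cons st2 /=; last by rewrite -!muln2; lia.
rewrite run_cons st1 //.
Qed.

Lemma sort_cB i t : sortable 2 ([:: (i.+1 + t).*2 + 4; 3] ++ om2 i.+2 t ++ [:: i.+1.*2.+2] ++ omega i ++ [:: 1;5;2]).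
Proof.
have [|si1 [e1 h1]] := @blocks_run t i.+1 [:: 3] [::] [::] [::] ([:: i.+1.*2.+2] ++ omega i ++ [:: 1;5;2]) _ isT isT.
  by rewrite /=; lia.
have [|si2 [e2 h2]] := @blocks_run i 0 [::] [:: 3] ((i.+1.*2 + 4) :: si1) [::] [:: 1;5;2] isT isT.
  by rewrite /= -!muln2; lia.
apply: (@sortable_run_nil _ (([:: 0;1;0] ++ blocks t) ++ [:: 2;1;0;1] ++ blocks i ++ finalY) ([:: 1;2;3;4;5] ++ si2)).
rewrite run_cat /= run_cons st0 // run_cons st1 // run_cons st0 //.
rewrite e1.
rewrite run_cons st2 /=; last by apply: cpi_mono h1; lia.
rewrite run_cons st1 //.
rewrite run_cons st0 //.
rewrite run_cons st1 /=; last by rewrite -!muln2; lia.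
rewrite run_cat.
have -> : i.+1.*2.+2 = (0 + i).*2 + 4 by rewrite -!muln2; lia.
rewrite omega_om2 e2.
by rewrite finalY_run.
Qed.


Lemma size_om2 lo m : size (om2 lo m) = m.*2.
Proof. elim: m => [|m IH] //; rewrite om2S /= IH doubleS. done. Qed.

Lemma delete_at_cat (L M : seq nat) i : size L <= i ->
  delete_at i (L ++ M) = L ++ delete_at (i - size L) M.
Proof.
move=> h; rewrite /delete_at take_cat drop_cat.
rewrite ltnNge h /= ltnNge (leq_trans h (leqnSn _)) /= catA.
by rewrite subSn.
Qed.

Lemma delete_at0 x (s : seq nat) : delete_at 0 (x :: s) = s.
Proof. by rewrite /delete_at /= drop0. Qed.

Lemma delete_atS x (s : seq nat) i : delete_at i.+1 (x :: s) = x :: delete_at i s.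
Proof. by []. Qed.

Lemma sortable_delete j pos : pos < size (alpha j) -> sortable 2 (delete_at pos (alpha j)).
Proof.
rewrite size_alpha => hp.
case: pos hp => [|[|pos]] hp.
- by rewrite alphaE !cat_cons cat0s delete_at0; exact: sort_c0.
- by rewrite alphaE !cat_cons cat0s delete_atS delete_at0; exact: sort_c1.
case: (ltnP pos (j.*2)) => h2.
- set t := pos %/ 2; set e := pos %% 2.
  have [i ej] : exists i, j = i.+1 + t by exists (j - t).-1; lia.
  have ep : pos.+2 = size ([:: j.*2 + 4; 3] ++ om2 i.+2 t) + e by rewrite size_cat size_om2 /=; lia.
  rewrite ep alphaE catA.
  have -> : omega j = om2 i.+2 t ++ omega i.+1 by rewrite !omega_om2 ej om2_split.
  rewrite omegaS catA -catA delete_at_cat; last by lia.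
  rewrite addKn.
  have : e < 2 by rewrite /e ltn_mod.
  clear ep.
  case: e => [|[|//]] _ /=.
  + rewrite delete_at0.
    have := sort_cA i t; rewrite -ej.
    by have -> : i.+1.*2 + 5 = i.*2 + 7 by rewrite doubleS; lia.
  + rewrite delete_atS delete_at0.
    have := sort_cB i t; rewrite -ej.
    by rewrite doubleS.
- rewrite alphaE catA delete_at_cat; last by rewrite size_cat size_omega /=; lia.
  rewrite size_cat size_omega /=.
  have : pos.+2 - (j.*2).+2 < 3 by lia.
  case E: (pos.+2 - (j.*2).+2) => [|[|[|//]]] _.
  + by rewrite delete_at0; exact: sort_c1'.
  + by rewrite delete_atS delete_at0; exact: sort_c5.
  + by rewrite !delete_atS /delete_at /=; exact: sort_c2.
Qed.


Lemma count_lt_iota x n : count (fun y => y < x) (iota 1 n) = minn x.-1 n.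
Proof.
elim: n => [|n IH]; first by rewrite minn0.
rewrite -[n.+1]addn1 iotaD count_cat IH /=; lia.
Qed.

Lemma std_perm_iota s n : perm_eq s (iota 1 n) -> std s = s.
Proof.
move=> p; rewrite /std -[RHS]map_id; apply/eq_in_map => x xs /=.
rewrite (permP p) count_lt_iota.
have : x \in iota 1 n by rewrite -(perm_mem p).
rewrite mem_iota; lia.
Qed.

Lemma mask_del (s : seq nat) m : size (mask m s) < size s ->
  exists m' i, i < size s /\ mask m s = mask m' (delete_at i s).
Proof.
elim: s m => [|x s IH] [|b m] //= h.
- by exists [::], 0; rewrite mask0s.
- case: b h => /= h.
  + have [|m' [i [hi e]]] := IH m; first by lia.
    by exists (true :: m'), i.+1; rewrite delete_atS /= e.
  + by exists m, 0; rewrite delete_at0.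
Qed.

Lemma uniq_delete_at (s : seq nat) i : uniq s -> uniq (delete_at i s).
Proof.
move=> u; apply: subseq_uniq u; rewrite -{2}(cat_take_drop i s) /delete_at.
apply: cat_subseq => //; rewrite -[i.+1]addn1 addnC -drop_drop; exact: drop_subseq.
Qed.

Theorem mainTheorem3 :
  (forall j k : nat, j <> k -> ~ contains (alpha j) (alpha k))
  /\ (forall j : nat, ~ sortable 2 (alpha j))
  /\ (forall j i : nat, i < size (alpha j) ->
        sortable 2 (std (delete_at i (alpha j)))).
Proof.
split; last split.
- move=> j k ne [m e].
  have sz : size (mask m (alpha k)) = j.*2 + 5 by rewrite -(size_map (fun x => (count (fun y => y < x) (mask m (alpha k))).+1)) -/(std _) e size_map size_alpha.
  have szk : size (mask m (alpha k)) <= k.*2 + 5 by rewrite -(size_alpha k) size_subseq // mask_subseq.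
  have lt : size (mask m (alpha k)) < size (alpha k).
    rewrite sz size_alpha; move: szk; rewrite sz => szk.
    lia.
  have [m' [i [hi e2]]] := mask_del lt.
  have := sortable_std_mask m' (uniq_delete_at i (alpha_uniq k)) (sortable_delete hi).
  rewrite -e2 e (std_perm_iota (alpha_perm j)).
  exact: alpha_not_sortable.
- move=> j; exact: alpha_not_sortable.
- move=> j i hi; have := sortable_std_filter predT (sortable_delete hi).
  by rewrite filter_predT.
Qed.
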